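(* Let $X$ and $Y$ be topological spaces with $Y$ a $T_0$-space, and let $p\colon X\to Y$ be a surjective continuous map. Let $R$ be an equivalence relation on $X$ such that: (i) if $x_1\sim_R x_2$ then $p(x_1)=p(x_2)$; (ii) for every open $U\subset X$, its $R$-saturation $R(U):=\{x\in X: x\sim_R u \text{ for some } u\in U\}$ is open in $X$; (iii) if $x\in X$ and $A\subset X$ satisfy $p(x)\in\overline{p(A)}$, then $x\in\overline{R(A)}$. Then $p$ induces a homeomorphism of $(X/R)^\sim$ onto $Y$. Moreover, $p\colon X\to Y$ is open, and $p(x_1)=p(x_2)$ if and only if $\overline{R(x_1)}=\overline{R(x_2)}$, where $R(x)$ denotes the $R$-equivalence class of $x$.
   Context: For a topological space $Z$, its $T_0$-ization (Kolmogorov quotient) $Z^\sim$ is the quotient space of $Z$ obtained by identifying two points whenever they have the same closure. $X/R$ carries the quotient topology. *)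

(* Defs.v *)
From HB Require Import structures.
From mathcomp Require Import all_boot all_order all_algebra generic_quotient.
From mathcomp Require Import all_classical all_reals all_analysis.
Set Implicit Arguments. Unset Strict Implicit. Unset Printing Implicit Defensive.
Local Open Scope classical_set_scope.
Local Open Scope quotient_scope.

Definition saturation (T : Type) (R : T -> T -> bool) (A : set T) : set T :=
  [set x | exists2 u, A u & R x u].

Definition eqclass (T : Type) (R : T -> T -> bool) (x : T) : set T :=
  [set y | R y x].

Definition quot_space (X : topologicalType) (R : equiv_rel X) : topologicalType :=
  quotient_topology {eq_quot R}.

Definition kolmo_relb (Z : topologicalType) (x y : Z) : bool :=
  `[< closure [set x] = closure [set y] >].

Lemma kolmo_refl (Z : topologicalType) : reflexive (@kolmo_relb Z).
Proof. by move=> x; apply/asboolP. Qed.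
Lemma kolmo_sym (Z : topologicalType) : symmetric (@kolmo_relb Z).
Proof. by move=> x y; apply/asboolP/asboolP. Qed.
Lemma kolmo_trans (Z : topologicalType) : transitive (@kolmo_relb Z).
Proof. by move=> y x z /asboolP H1 /asboolP H2; apply/asboolP; rewrite H1. Qed.

Definition kolmo_rel (Z : topologicalType) : equiv_rel Z :=
  EquivRel (@kolmo_relb Z) (@kolmo_refl Z) (@kolmo_sym Z) (@kolmo_trans Z).

Definition T0ization (Z : topologicalType) : topologicalType :=
  quotient_topology {eq_quot (kolmo_rel Z)}.

Definition quot_pi (X : topologicalType) (R : equiv_rel X) : X -> quot_space R :=
  fun x => \pi_({eq_quot R}) x.
Definition T0_pi (Z : topologicalType) : Z -> T0ization Z :=
  fun z => \pi_({eq_quot (kolmo_rel Z)}) z.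

Definition homeomorphism (S T : topologicalType) (h : S -> T) : Prop :=
  continuous h /\ exists g : T -> S,
    [/\ cancel h g, cancel g h & continuous g].

Definition open_map (S T : topologicalType) (f : S -> T) : Prop :=
  forall U : set S, open U -> open (f @` U).

(* Main.v *)
Require Import Defs.
From HB Require Import structures.
From mathcomp Require Import all_boot all_order all_algebra generic_quotient.
From mathcomp Require Import all_classical all_reals all_analysis.
Local Open Scope classical_set_scope.
Local Open Scope quotient_scope.

Lemma cont_closure (S T : topologicalType) (f : S -> T) (A : set S) x :
  continuous f -> closure A x -> closure (f @` A) (f x).
Proof.
move=> cf cA B hB; have := cf x B hB => /cA [y [Ay By]].
by exists (f y); split => //; exists y.
Qed.

Arguments cont_closure {S T f A x}.

Lemma T0_eq (Y : topologicalType) (a b : Y) : kolmogorov_space Y ->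
  closure [set b] a -> closure [set a] b -> a = b.
Proof.
move=> K ca cb; case: (eqVneq a b) => // /K [A [[/set_mem nA /set_mem nb]|[/set_mem nA /set_mem na]]].
- by have [y [/= -> ?]] := ca _ nA.
- by have [y [/= -> ?]] := cb _ nA.
Qed.

Lemma pi_eqP (X : topologicalType) (R : equiv_rel X) (x y : X) :
  quot_pi R x = quot_pi R y <-> R x y.
Proof. by rewrite /quot_pi; split => [/eqmodP|/eqmodP]. Qed.

Lemma T0_eqP (Z : topologicalType) (x y : Z) :
  T0_pi x = T0_pi y <-> closure [set x] = closure [set y].
Proof.
rewrite /T0_pi; split => H.
- by move/(eqmodP (kolmo_rel Z) x y): H => /asboolP.
- by apply/(eqmodP (kolmo_rel Z) x y); apply/asboolP.
Qed.

Lemma cl_iff (Z : topologicalType) (a b : Z) :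
  closure [set a] = closure [set b] <-> closure [set a] b /\ closure [set b] a.
Proof.
have sub (c d : Z) : closure [set c] d -> closure [set d] `<=` closure [set c].
  move=> H y /(closureS (_ : [set d] `<=` closure [set c])) Hy.
  suff : closure (closure [set c]) y by apply: closed_closure.
  apply: Hy.
  by move=> ? ->.
split => [E|[H1 H2]].
- by split; [rewrite E|rewrite -E]; apply: subset_closure.
- by apply/seteqP; split; apply: sub.
Qed.

Theorem lemma1p4 (X Y : topologicalType) (p : X -> Y) (R : equiv_rel X) :
  kolmogorov_space Y ->
  (forall y : Y, exists x : X, p x = y) ->
  continuous p ->
  (forall x1 x2 : X, R x1 x2 -> p x1 = p x2) ->
  (forall U : set X, open U -> open (saturation R U)) ->
  (forall (x : X) (A : set X), closure (p @` A) (p x) ->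
      closure (saturation R A) x) ->
  (exists h : T0ization (quot_space R) -> Y,
      homeomorphism h /\ forall x : X, h (T0_pi (quot_pi R x)) = p x)
  /\ open_map p
  /\ (forall x1 x2 : X,
        p x1 = p x2 <-> closure (eqclass R x1) = closure (eqclass R x2)).
Proof.
move=> T0Y surj cp Rp satO cl3.
pose f : quot_space R -> Y := fun z => p (repr z).
have fpi x : f (quot_pi R x) = p x.
  by rewrite /f; apply: Rp; apply/pi_eqP; rewrite /quot_pi reprK.
have cf : continuous f.
  apply: (@repr_comp_continuous _ {eq_quot R} _ p cp).
  by move=> a b /eqP /pi_eqP /Rp ->.
have cpi : continuous (quot_pi R) := pi_continuous.
have satx x : saturation R [set x] = eqclass R x.
  by rewrite /saturation /eqclass; apply/seteqP; split => y /=;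
    [case=> u -> | exists x].
have imgsat x : quot_pi R @` eqclass R x = [set quot_pi R x].
  apply/seteqP; split => y /=; first by case=> u Ru <-; apply/pi_eqP.
  by move=> ->; exists x => //=; rewrite /eqclass /=; exact: generic_quotient.equiv_refl.
have L x x' : closure [set quot_pi R x] (quot_pi R x') = closure [set p x] (p x').
  apply/propext; split => H.
  - by have := cont_closure cf H; rewrite image_set1 !fpi.
  - have : closure (p @` [set x]) (p x') by rewrite image_set1.
    by move/cl3; rewrite satx => /(cont_closure cpi); rewrite imgsat.
have ex z : exists x, z = quot_pi R x by exists (repr z); rewrite /quot_pi reprK.
have K z1 z2 : closure [set z1] = closure [set z2] <-> f z1 = f z2.
  have [x1 ->] := ex z1; have [x2 ->] := ex z2.
  rewrite cl_iff !L !fpi; split.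
  - by case=> ? ?; apply: T0_eq.
  - by move=> ->; split; apply: subset_closure.
have pcl x x' : p x' = p x -> closure (eqclass R x) x'.
  move=> e; rewrite -satx; apply: cl3; rewrite e; apply/subset_closure.
  by exists x.
have sub x1 x2 : p x1 = p x2 -> closure (eqclass R x1) `<=` closure (eqclass R x2).
  move=> e y /(closureS (_ : eqclass R x1 `<=` closure (eqclass R x2))) Hy.
  suff : closure (closure (eqclass R x2)) y by apply: closed_closure.
  apply: Hy => z /= Rz; apply: pcl; by rewrite (Rp _ _ Rz) e.
have partB x1 x2 : p x1 = p x2 <-> closure (eqclass R x1) = closure (eqclass R x2).
  split => [e|E]; first by apply/seteqP; split; apply: sub.
  have one a b : closure (eqclass R a) = closure (eqclass R b) -> closure [set p b] (p a).
    move=> Eab; have : closure (eqclass R b) a.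
      by rewrite -Eab; apply: subset_closure; exact: generic_quotient.equiv_refl.
    move/(cont_closure cp); apply: closureS => _ [z Rz <-] /=; exact: Rp.
  by apply: T0_eq => //; [exact: one E | apply: one; rewrite E].

have popen : open_map p.
  move=> U oU; pose V := saturation R U; pose C := ~` V.
  have VU u : U u -> V u by move=> Uu; exists u => //; exact: generic_quotient.equiv_refl.
  have cC : closed C by apply: open_closedC; exact: satO.
  have satC : saturation R C `<=` C.
    move=> x [c Cc Rxc] [u Uu Rxu]; apply: Cc; exists u => //.
    by apply: (generic_quotient.equiv_trans _ Rxu); rewrite generic_quotient.equiv_sym.
  have H0 u : U u -> ~ closure (p @` C) (p u).
    move=> Uu /cl3 /(closureS satC) Cu.
    have : C u by rewrite ((closure_id _).1 cC).
    by apply; apply: VU.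
  have E : p @` U = ~` (p @` C).
    apply/seteqP; split => y.
    - by case=> u Uu <- [c Cc Ecu]; apply: (H0 u Uu); rewrite -Ecu; apply: subset_closure; exists c.
    - have [x <-] := surj y => nC.
      have : V x by apply: contrapT => nV; apply: nC; exists x.
      by case=> u Uu Rxu; exists u => //; apply/esym/Rp.
  rewrite E; apply: closed_openC.
  apply/closure_id/seteqP; split; first exact: subset_closure.
  move=> y; have [x <-] := surj y => cy.
  have [Cx|nCx] := pselect (C x); first by exists x.
  have : V x by apply: contrapT.
  case=> u Uu Rxu; exfalso; apply: (H0 u Uu); by rewrite -(Rp _ _ Rxu).
split; [|split; [exact: popen|exact: partB]].
pose h : T0ization (quot_space R) -> Y := fun q => f (repr q).
have hpi z : h (T0_pi z) = f z.
  by apply/K/T0_eqP; rewrite /T0_pi reprK.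
have hT x : h (T0_pi (quot_pi R x)) = p x by rewrite hpi fpi.
have ch : continuous h.
  apply: (@repr_comp_continuous _ {eq_quot kolmo_rel (quot_space R)} _ f cf).
  by move=> a b /eqP /T0_eqP /K ->.
have [gx Hgx] := choice surj.
pose g : Y -> T0ization (quot_space R) := fun y => T0_pi (quot_pi R (gx y)).
have hinj q1 q2 : h q1 = h q2 -> q1 = q2.
  move=> e; rewrite -[q1]reprK -[q2]reprK.
  by apply/T0_eqP/K.
have hg y : h (g y) = y by rewrite /g hT Hgx.
exists h; split => //; split => //; exists g; split.
- by move=> q; apply: hinj; rewrite hg.
- exact: hg.
- apply/continuousP => W oW.
  have cc : continuous (@T0_pi (quot_space R) \o quot_pi R).
    by move=> x; apply: continuous_comp; [exact: cpi | exact: pi_continuous].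
  have oU := (continuousP _).1 cc W oW.
  suff -> : g @^-1` W = p @` ((@T0_pi (quot_space R) \o quot_pi R) @^-1` W) by exact: popen.
  apply/seteqP; split => y /=.
  + by move=> Wg; exists (gx y) => //.
  + case=> x Wx <-.
    have -> : g (p x) = T0_pi (quot_pi R x) by apply: hinj; rewrite hg hT.
    exact: Wx.
Qed.
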